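(* Let $\Gamma=([n],E)$ be a simple graph, $k\ge1$ an integer, and $\mathsf{P}$ an $\mathcal{H}$-poset of the hypergraph $\mathsf{H}_k(\Gamma)$ which is not an $\mathcal{H}$-poset of $\mathsf{H}_{k+1}(\Gamma)$. Then there is an $\mathcal{H}$-poset $\mathsf{P}'$ of $\mathsf{H}_{k+1}(\Gamma)$ obtained from $\mathsf{P}$ by adding relations, i.e. $i<_{\mathsf{P}}j$ implies $i<_{\mathsf{P}'}j$ for all $i,j\in[n]$.
   Context: $\mathsf{H}_m(\Gamma)=\{S\subseteq[n]:S\neq\emptyset,\ |S|\le m+1,\ \Gamma|_S\text{ connected}\}$. A poset $\mathsf{P}$ on $[n]$ is an $\mathcal{H}$-poset of a hypergraph $\mathsf{H}$ (a set of nonempty subsets of $[n]$) if (1) for every $H\in\mathsf{H}$ the Hasse diagram of the induced subposet $\mathsf{P}|_H$ is a rooted tree (as an undirected graph it is a tree, and $\mathsf{P}|_H$ has a unique maximal element); and (2) whenever $i\lessdot_{\mathsf{P}}j$ ($i<_{\mathsf{P}}j$ with no $k$ strictly between), there exists $H\in\mathsf{H}$ with $\{i,j\}\subseteq H$. *)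

(* Defs.v *)
From mathcomp Require Import all_boot.
Set Implicit Arguments. Unset Strict Implicit. Unset Printing Implicit Defensive.

Definition simple_graph (n : nat) (g : rel 'I_n) : Prop :=
  symmetric g /\ irreflexive g.

Definition restrict_rel (n : nat) (e : rel 'I_n) (S : {set 'I_n}) : rel 'I_n :=
  fun a b => [&& a \in S, b \in S & e a b].

Definition connected_on (n : nat) (e : rel 'I_n) (S : {set 'I_n}) : bool :=
  (0 < #|S|) && [forall x in S, forall y in S, connect (restrict_rel e S) x y].

Definition Hm (n : nat) (g : rel 'I_n) (m : nat) (S : {set 'I_n}) : bool :=
  [&& 0 < #|S|, #|S| <= m.+1 & connected_on g S].

Definition strict_order (n : nat) (lt : rel 'I_n) : Prop :=
  irreflexive lt /\ transitive lt.

Definition covers_in (n : nat) (lt : rel 'I_n) (H : {set 'I_n}) (i j : 'I_n) : bool :=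
  [&& i \in H, j \in H, lt i j & ~~ [exists k in H, lt i k && lt k j]].

Definition covers (n : nat) (lt : rel 'I_n) (i j : 'I_n) : bool :=
  covers_in lt [set: 'I_n] i j.

Definition hasse_edge (n : nat) (lt : rel 'I_n) (H : {set 'I_n}) : rel 'I_n :=
  fun i j => covers_in lt H i j || covers_in lt H j i.

Definition has_cycle_on (n : nat) (e : rel 'I_n) (S : {set 'I_n}) : Prop :=
  exists (x : 'I_n) (p : seq 'I_n),
    [/\ 2 <= size p, uniq (x :: p), path (restrict_rel e S) x p
      & restrict_rel e S (last x p) x].

Definition is_tree_on (n : nat) (e : rel 'I_n) (S : {set 'I_n}) : Prop :=
  connected_on e S /\ ~ has_cycle_on e S.

Definition unique_max_in (n : nat) (lt : rel 'I_n) (H : {set 'I_n}) : Prop :=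
  exists! x : 'I_n, x \in H /\ forall y, y \in H -> ~~ lt x y.

Definition H_poset (n : nat) (hg : {set 'I_n} -> bool) (lt : rel 'I_n) : Prop :=
  (forall H, hg H -> is_tree_on (hasse_edge lt H) H /\ unique_max_in lt H) /\
  (forall i j, covers lt i j -> exists H, hg H /\ i \in H /\ j \in H).

(* Main.v *)
Require Import Defs.
From mathcomp Require Import all_boot.
From mathcomp Require Import zify.
Set Implicit Arguments. Unset Strict Implicit. Unset Printing Implicit Defensive.

Lemma covers_in_eq n (lt lt' : rel 'I_n) (H : {set 'I_n}) :
  (forall i j, i \in H -> j \in H -> lt i j = lt' i j) ->
  forall i j, covers_in lt H i j = covers_in lt' H i j.
Proof.
move=> E i j; rewrite /covers_in.
case iH: (i \in H); case jH: (j \in H) => //=.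
rewrite E //; congr (_ && ~~ _); apply: eq_existsb => m.
case mH: (m \in H) => //=; by rewrite !E.
Qed.

Section Core.
Variables (n : nat) (key : 'I_n -> nat) (key_inj : injective key) (S : {set 'I_n}).
Let lt := fun i j : 'I_n => key i < key j.
Let r := restrict_rel (hasse_edge lt S) S.

Lemma max_ex : 0 < #|S| -> exists2 z, z \in S & forall y, y \in S -> key y <= key z.
Proof.
move/card_gt0P => [x0 Hx0].
have [z Hz Hmax] := @arg_maxnP _ x0 (fun x => x \in S) key Hx0.
by exists z.
Qed.

Lemma edge_down a z : key a < key z -> hasse_edge lt S z a -> covers_in lt S a z.
Proof.
move=> az; rewrite /hasse_edge /covers_in => /orP [/and4P [_ _ H _]|//].
by rewrite /lt in H; exfalso; lia.
Qed.

Lemma pred_unique a b z : covers_in lt S a z -> covers_in lt S b z -> a = b.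
Proof.
move=> /and4P [aS zS az Na] /and4P [bS _ bz Nb].
case: (eqVneq a b) => // ab; exfalso.
have kab : key a != key b by apply: contra ab => /eqP /key_inj ->.
case: (ltngtP (key a) (key b)) => [h|h|h]; last by rewrite h eqxx in kab.
- by move/negP: Na; apply; apply/existsP; exists b; rewrite bS /lt h.
- by move/negP: Nb; apply; apply/existsP; exists a; rewrite aS /lt h.
Qed.

Lemma r_sym : symmetric r.
Proof. by move=> a b; rewrite /r /restrict_rel /hasse_edge orbC andbCA. Qed.

Lemma connected_core : 0 < #|S| -> connected_on (hasse_edge lt S) S.
Proof.
move=> S0; have [z zS zmax] := max_ex S0.
have toz : forall x, x \in S -> connect r x z.
  move=> x; move: {2}(key z - key x) (leqnn (key z - key x)) => m.
  elim: m x => [|m IH] x Hm xS; (case: (eqVneq x z) => [->|xz]; first exact: connect0).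
  - have := zmax x xS; have : key x != key z by apply: contra xz => /eqP /key_inj ->.
    move=> h1 h2; exfalso; lia.
  - have kx : key x < key z.
      have := zmax x xS; have : key x != key z by apply: contra xz => /eqP /key_inj ->.
      move=> h1 h2; lia.
    have zin : z \in [set y in S | key x < key y] by rewrite inE zS kx.
    have [y] := @arg_minnP _ z (fun y => y \in [set y in S | key x < key y]) key zin.
    rewrite inE => /andP [yS xy] ymin.
    have rxy : r x y.
      rewrite /r /restrict_rel xS yS /hasse_edge /=; apply/orP; left.
      rewrite /covers_in xS yS /lt xy /=; apply/negP => /existsP [w /and3P [wS xw wy]].
      have := ymin w; rewrite inE wS xw => /(_ isT); lia.
    apply: connect_trans (connect1 rxy) _; apply: IH => //.
    have := zmax y yS; lia.
rewrite /connected_on S0 /=; apply/forallP => x; apply/implyP => xS.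
apply/forallP => y; apply/implyP => yS.
apply: connect_trans (toz x xS) _.
by rewrite (sym_connect_sym r_sym); apply: toz.
Qed.

Lemma acyclic_core : ~ has_cycle_on (hasse_edge lt S) S.
Proof.
move=> [x [p [Hsz Hu Hp Hl]]].
set c := x :: p.
have Hc : cycle r c by rewrite /c /= rcons_path; apply/andP.
have xc : x \in c by rewrite /c inE eqxx.
have [z zc zmax] := @arg_maxnP _ x (fun y => y \in c) key xc.
case: (rot_to zc) => i c' Hrot.
have Hc' : cycle r (z :: c') by rewrite -Hrot rot_cycle.
have Hu' : uniq (z :: c') by rewrite -Hrot rot_uniq.
have Hs' : size (z :: c') = size c by rewrite -Hrot size_rot.
have inc : forall y, y \in z :: c' -> y \in c by move=> y; rewrite -Hrot mem_rot.
case: c' Hrot Hc' Hu' Hs' inc => [|a c''] Hrot Hc' Hu' Hs' inc.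
  by move: Hs' Hsz; rewrite /c /=; lia.
case: c'' Hrot Hc' Hu' Hs' inc => [|d c3] Hrot Hc' Hu' Hs' inc.
  by move: Hs' Hsz; rewrite /c /=; lia.
set b := last d c3.
move: Hc'; rewrite /= rcons_path => /and3P [rza _ rbz].
move: Hu'; rewrite /= !inE => /andP [/norP [za /norP [zd zc3]] /andP [/norP [ad ac3] _]].
have bin : b \in d :: c3 by apply: mem_last.
have ab : a != b.
  apply: contraTneq bin => <-; rewrite inE negb_or ad /=; exact: ac3.
have lt_z : forall y, y \in z :: a :: d :: c3 -> y != z -> key y < key z.
  move=> y yin yz; have := zmax y (inc y yin).
  have : key y != key z by apply: contra yz => /eqP /key_inj ->.
  by move=> h1 h2; rewrite ltn_neqAle h1; exact: h2.
have kaz : key a < key z by apply: lt_z; [rewrite in_cons in_cons eqxx orbT | rewrite eq_sym].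
have kbz : key b < key z.
  apply: lt_z; first by rewrite in_cons in_cons bin !orbT.
  by apply: contraTneq bin => ->; rewrite in_cons negb_or zd.
move: rza rbz; rewrite /r /restrict_rel => /and3P [_ _ eza] /and3P [_ _ ebz].
have c1 := edge_down kaz eza.
have c2 : covers_in lt S b z.
  apply: (edge_down kbz). rewrite /hasse_edge orbC. by case/andP: ebz.
by move: ab; rewrite (pred_unique c1 c2) eqxx.
Qed.

Lemma tree_core : 0 < #|S| -> is_tree_on (hasse_edge lt S) S /\ unique_max_in lt S.
Proof.
move=> S0; split; first by split; [exact: connected_core | exact: acyclic_core].
have [z zS zmax] := max_ex S0.
exists z; split.
  split => // y yS; rewrite /lt -leqNgt; exact: zmax.
move=> x' [x'S Hx']; apply: key_inj; apply/eqP; rewrite eqn_leq zmax //=.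
by rewrite andbT leqNgt; exact: (Hx' z zS).
Qed.
End Core.

Section Main.
Variables (n : nat) (g : rel 'I_n) (k : nat) (P : rel 'I_n).
Hypothesis Pirr : irreflexive P.
Hypothesis Ptr : transitive P.
Hypothesis Pcov : forall i j, covers P i j -> exists H, Hm g k H /\ i \in H /\ j \in H.

Definition fP (i : 'I_n) := #|[set x | P x i]|.
Definition keyP (i : 'I_n) := fP i * n + i.

Lemma keyP_inj : injective keyP.
Proof.
move=> i j E; apply: val_inj => /=.
have := congr1 (modn^~ n) E; rewrite /keyP /= !modnMDl !modn_small //.
Qed.

Lemma keyP_mono i j : P i j -> keyP i < keyP j.
Proof.
move=> Pij.
have : fP i < fP j.
  apply: proper_card; apply/properP; split.
    by apply/subsetP => x; rewrite !inE => Pxi; apply: Ptr Pij.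
  by exists i; rewrite !inE ?Pij // Pirr.
rewrite /keyP => h; have := ltn_ord i; have := ltn_ord j; nia.
Qed.

Definition close (i j : 'I_n) :=
  [exists S : {set 'I_n}, [&& Hm g k.+1 S, i \in S & j \in S]].
Definition R (i j : 'I_n) := (keyP i < keyP j) && close i j.
Definition Q (i j : 'I_n) := [exists m, R i m && connect R m j].

Lemma connectR_le x y : connect R x y -> keyP x <= keyP y.
Proof.
move/connectP => [p Hp ->]; elim: p x Hp => [|a p IH] x //= /andP [/andP [xa _] Hp].
apply: leq_trans (IH _ Hp); exact: ltnW.
Qed.

Lemma Q_key i j : Q i j -> keyP i < keyP j.
Proof.
move/existsP => [m /andP [/andP [im _] mj]].
exact: leq_trans im (connectR_le mj).
Qed.

Lemma Q_trans : transitive Q.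
Proof.
move=> j i l /existsP [m /andP [Rim cmj]] /existsP [m' /andP [Rjm' cm'l]].
apply/existsP; exists m; rewrite Rim /=.
apply: connect_trans cmj _; apply: connect_trans (connect1 Rjm') cm'l.
Qed.

Lemma Q_irr : irreflexive Q.
Proof. by move=> i; apply/negbTE/negP => h; have := Q_key h; rewrite ltnn. Qed.

Lemma R_Q i j : R i j -> Q i j.
Proof. by move=> h; apply/existsP; exists j; rewrite h connect0. Qed.

Lemma Q_in S i j : Hm g k.+1 S -> i \in S -> j \in S -> Q i j = (keyP i < keyP j).
Proof.
move=> HS iS jS; apply/idP/idP; first exact: Q_key.
move=> h; apply: R_Q; rewrite /R h /=; apply/existsP; exists S; by rewrite HS iS jS.
Qed.

Lemma Q_covers i j : covers Q i j -> exists H, Hm g k.+1 H /\ i \in H /\ j \in H.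
Proof.
rewrite /covers /covers_in => /and4P [_ _ Qij Nb].
move: Qij => /existsP [m /andP [Rim cmj]].
case: (eqVneq m j) => [emj|nmj].
  subst m; move: Rim => /andP [_ /existsP [H /and3P [HH iH jH]]]; by exists H.
exfalso; move/negP: Nb; apply; apply/existsP; exists m; rewrite in_setT R_Q //=.
move/connectP: cmj => [[|a p] /= Hp Hl]; first by rewrite Hl eqxx in nmj.
move/andP: Hp => [Rma Hp]; apply/existsP; exists a; rewrite Rma /=.
by apply/connectP; exists p.
Qed.

Lemma cov_Q i j : P i j -> ~~ [exists m, P i m && P m j] -> Q i j.
Proof.
move=> Pij Hno; apply: R_Q; rewrite /R keyP_mono //=.
have [|H [HH [iH jH]]] := @Pcov i j.
  rewrite /covers /covers_in !in_setT Pij /=.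
  by apply/negP => /existsP [m /andP [_ h]]; move/negP: Hno; apply; apply/existsP; exists m.
apply/existsP; exists H; rewrite iH jH andbT.
move: HH; rewrite /Hm => /and3P [h1 h2 h3]; rewrite h1 h3 /=.
by rewrite !andbT; apply: leq_trans h2 _.
Qed.

Lemma P_Q i j : P i j -> Q i j.
Proof.
suff H : forall b i j, #|[set m | P i m && P m j]| <= b -> P i j -> Q i j.
  by move=> Pij; apply: (H _ i j (leqnn _)).
elim=> [|b IH] {}i {}j Hb Pij; (case: (boolP [exists m, P i m && P m j]) =>
  [/existsP [m /andP [Pim Pmj]] | Hno]; last exact: cov_Q).
  have : 0 < #|[set m | P i m && P m j]| by apply/card_gt0P; exists m; rewrite inE Pim.
  by rewrite leqn0 in Hb; rewrite (eqP Hb).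
have sub1 : #|[set x | P i x && P x m]| < #|[set x | P i x && P x j]|.
  apply: proper_card; apply/properP; split.
    by apply/subsetP => x; rewrite !inE => /andP [-> h] /=; apply: Ptr Pmj.
  by exists m; rewrite !inE ?Pim ?Pmj // Pirr andbF.
have sub2 : #|[set x | P m x && P x j]| < #|[set x | P i x && P x j]|.
  apply: proper_card; apply/properP; split.
    by apply/subsetP => x; rewrite !inE => /andP [h ->]; rewrite andbT; apply: Ptr h.
  by exists m; rewrite !inE ?Pim ?Pmj // Pirr.
apply: (@Q_trans m); apply: IH => //.
- by rewrite -ltnS; apply: leq_trans sub1 Hb.
- by rewrite -ltnS; apply: leq_trans sub2 Hb.
Qed.

Lemma Q_Hposet : H_poset (Hm g k.+1) Q.
Proof.
split; last exact: Q_covers.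
move=> H HH.
have E : forall i j, i \in H -> j \in H -> Q i j = (fun a b => keyP a < keyP b) i j.
  by move=> i j iH jH; rewrite (Q_in HH iH jH).
have S0 : 0 < #|H| by case/and3P: HH.
have [[Hc Ha] [z [[zH zmax] zuniq]]] := tree_core keyP_inj S0.
have Ee : forall a b, hasse_edge Q H a b = hasse_edge (fun a b => keyP a < keyP b) H a b.
  by move=> a b; rewrite /hasse_edge !(covers_in_eq E).
have Er : restrict_rel (hasse_edge Q H) H =2 restrict_rel (hasse_edge (fun a b => keyP a < keyP b) H) H.
  by move=> a b; rewrite /restrict_rel Ee.
split; first split.
- move: Hc; rewrite /connected_on; case/andP => -> /= /forallP Hc.
  apply/forallP => x; apply/implyP => xH; apply/forallP => y; apply/implyP => yH.
  rewrite (eq_connect Er).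
  by move: (Hc x); rewrite xH /= => /forallP /(_ y); rewrite yH.
- move=> [x [p [s1 s2 s3 s4]]]; apply: Ha; exists x, p; split => //.
  + by rewrite -(eq_path Er).
  + by rewrite -Er.
- exists z; split.
    split => // y yH; rewrite E //; exact: zmax.
  move=> x' [x'H Hx']; apply: zuniq; split => // y yH; rewrite -E //; exact: Hx'.
Qed.
End Main.

Theorem mainTheorem10 (n : nat) (g : rel 'I_n) (k : nat) (P : rel 'I_n) :
  simple_graph g -> 1 <= k ->
  strict_order P ->
  H_poset (Hm g k) P -> ~ H_poset (Hm g k.+1) P ->
  exists P' : rel 'I_n,
    [/\ strict_order P', H_poset (Hm g k.+1) P'
      & forall i j, P i j -> P' i j].
Proof.
move=> _ _ [Pirr Ptr] [_ Pcov] _.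
exists (Q g k P); split.
- split; [exact: Q_irr | exact: Q_trans].
- by apply: Q_Hposet.
- by move=> i j; apply: P_Q.
Qed.
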